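(* For every integer $t$ there exists a finite simple graph $G$ with $\Delta_2(G) \geq t$ and $\chi(G) > \max\{\omega(G), \Delta_2(G)\}$.
   Context: $\chi(G)$ is the chromatic number and $\omega(G)$ the clique number. $\Delta_2(G)$ is the largest degree that a vertex $v$ of $G$ can have subject to the condition that $v$ is adjacent to a vertex whose degree is at least as large as the degree of $v$. *)

(* Defs.v *)
From mathcomp Require Import all_boot all_order all_algebra.
Set Implicit Arguments. Unset Strict Implicit. Unset Printing Implicit Defensive.

Definition simple_graph (T : finType) (e : rel T) : Prop :=
  symmetric e /\ irreflexive e.

Definition deg (T : finType) (e : rel T) (v : T) : nat := #|[set u | e v u]|.

(* Delta_2(G): largest degree of a vertex v adjacent to some u with
   deg u >= deg v (0 if there is no such vertex, i.e. G edgeless). *)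
Definition Delta2 (T : finType) (e : rel T) : nat :=
  \max_(v : T | [exists u, e v u && (deg e v <= deg e u)]) deg e v.

Definition is_clique (T : finType) (e : rel T) (A : {set T}) : bool :=
  [forall x in A, forall y in A, (x != y) ==> e x y].

Definition omega (T : finType) (e : rel T) : nat :=
  \max_(A : {set T} | is_clique e A) #|A|.

Definition proper_coloring (T : finType) (e : rel T) (k : nat)
  (c : {ffun T -> 'I_k}) : bool :=
  [forall x, forall y, e x y ==> (c x != c y)].

Definition colorable (T : finType) (e : rel T) (k : nat) : bool :=
  [exists c : {ffun T -> 'I_k}, proper_coloring e c].

(* least k admitting a proper k-colouring (#|T| colours always suffice
   for a simple graph, so the default #|T| is never spuriously reached). *)
Definition chi (T : finType) (e : rel T) : nat :=
  \big[minn/#|T|]_(k < #|T|.+1 | colorable e k) k.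

(* Main.v *)
Require Import Defs.
From mathcomp Require Import all_boot all_order all_algebra zify.
Set Implicit Arguments. Unset Strict Implicit. Unset Printing Implicit Defensive.

Section G.
Variable n : nat.
Definition V := option ('I_n.+1 + 'I_n.+1)%type.
Definition mx : 'I_n.+1 := ord_max.

Definition adj (x y : V) : bool :=
 match x, y with
 | None, Some (inl j) | None, Some (inr j) => j != mx
 | Some (inl i), None | Some (inr i), None => i != mx
 | Some (inl i), Some (inl j) | Some (inr i), Some (inr j) => i != j
 | Some (inl i), Some (inr j) | Some (inr i), Some (inl j) => (i == mx) && (j == mx)
 | None, None => false
 end.

Lemma adj_simple : simple_graph adj.
Proof.
split.
- by move=> [[i|i]|] [[j|j]|] //=; rewrite ?(eq_sym i) // andbC.
- by move=> [[i|i]|] //=; rewrite eqxx.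
Qed.

Lemma not_col k (c : {ffun V -> 'I_k}) : k <= n.+1 -> proper_coloring adj c -> False.
Proof.
move=> kle /forallP H.
have H' x y : adj x y -> c x != c y by move=> a; have := forallP (H x) y; rewrite a.
pose f := fun i : 'I_n.+1 => c (Some (inl i)).
pose g := fun i : 'I_n.+1 => c (Some (inr i)).
have finj : injective f.
  move=> i j fij; apply/eqP; apply: contraT => ne.
  by have := H' (Some (inl i)) (Some (inl j)) ne; rewrite /f in fij; rewrite fij eqxx.
have ginj : injective g.
  move=> i j fij; apply/eqP; apply: contraT => ne.
  by have := H' (Some (inr i)) (Some (inr j)) ne; rewrite /g in fij; rewrite fij eqxx.
have cd : #|'I_k| <= #|'I_n.+1| by rewrite !card_ord.
have /codomP [i hi] := inj_card_onto finj cd (c None).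
have /codomP [j hj] := inj_card_onto ginj cd (c None).
have im : i = mx.
  apply/eqP; apply: contraT => ne.
  by have := H' None (Some (inl i)) ne; rewrite hi eqxx.
have jm : j = mx.
  apply/eqP; apply: contraT => ne.
  by have := H' None (Some (inr j)) ne; rewrite hj eqxx.
have := H' (Some (inl mx)) (Some (inr mx)) (introT andP (conj (eqxx _) (eqxx _))).
rewrite im in hi; rewrite jm in hj.
by rewrite -/(f mx) -/(g mx) -hi -hj eqxx.
Qed.

Lemma chi_ge : n.+2 <= chi adj.
Proof.
rewrite /chi; apply: (big_ind (fun x => n.+2 <= x)).
- by rewrite card_option card_sum !card_ord; lia.
- by move=> x y hx hy; rewrite leq_min hx hy.
- move=> k /existsP [c hc]; rewrite ltnNge; apply/negP => kle.
  exact: (not_col kle hc).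
Qed.
End G.

Section G2.
Variable n : nat.

Lemma deg_inl (i : 'I_n.+1) : deg (adj (n:=n)) (Some (inl i)) = n.+1.
Proof.
rewrite /deg.
pose ex : V n := if i == mx n then Some (inr (mx n)) else None.
have -> : [set u | adj (Some (inl i)) u] =
   ex |: [set Some (inl j) | j in [set~ i]].
  apply/setP => -[[j|j]|]; rewrite !inE /= /ex.
  - have inj : injective (fun j : 'I_n.+1 => Some (@inl _ 'I_n.+1 j)) by move=> a b [].
    rewrite (mem_imset _ _ inj).
    by rewrite !inE eq_sym; case: (i == mx n).
  - case: (i =P mx n) => [->|ne] /=.
      apply/eqP/idP => [->|]; first by rewrite eqxx.
      by case/orP => [/eqP [] ->|/imsetP [x _ //]].
    symmetry; apply/negP => /imsetP [x _ //].
  - case: (i =P mx n) => [->|ne] /=; last by [].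
    symmetry; apply/negP => /imsetP [x _ //].
rewrite cardsU1 card_imset; last by move=> a b [].
rewrite cardsC1 card_ord /= /ex.
have -> : (ex \notin [set Some (inl j) | j in [set~ i]]) = true.
  by apply/negP => /imsetP [x _]; rewrite /ex; case: (i == mx n).
by [].
Qed.
Lemma deg_inr (i : 'I_n.+1) : deg (adj (n:=n)) (Some (inr i)) = n.+1.
Proof.
rewrite /deg.
pose ex : V n := if i == mx n then Some (inl (mx n)) else None.
have -> : [set u | adj (Some (inr i)) u] =
   ex |: [set Some (inr j) | j in [set~ i]].
  apply/setP => -[[j|j]|]; rewrite !inE /= /ex.
  - case: (i =P mx n) => [->|ne] /=.
      apply/eqP/idP => [->|]; first by rewrite eqxx.
      by case/orP => [/eqP [] ->|/imsetP [x _ //]].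
    symmetry; apply/negP => /imsetP [x _ //].
  - have inj : injective (fun j : 'I_n.+1 => Some (@inr 'I_n.+1 'I_n.+1 j)) by move=> a b [].
    rewrite (mem_imset _ _ inj).
    by rewrite !inE eq_sym; case: (i == mx n).
  - case: (i =P mx n) => [->|ne] /=; last by [].
    symmetry; apply/negP => /imsetP [x _ //].
rewrite cardsU1 card_imset; last by move=> a b [].
rewrite cardsC1 card_ord /= /ex.
have -> : (ex \notin [set Some (inr j) | j in [set~ i]]) = true.
  by apply/negP => /imsetP [x _]; rewrite /ex; case: (i == mx n).
by [].
Qed.

Lemma deg_some x : deg (adj (n:=n)) (Some x) = n.+1.
Proof. by case: x => i; rewrite ?deg_inl ?deg_inr. Qed.

Lemma Delta2_le : Delta2 (adj (n:=n)) <= n.+1.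
Proof.
apply/bigmax_leqP => -[x|] /existsP [u /andP [a le]]; first by rewrite deg_some.
by case: u a le => [y|] //= _; rewrite deg_some.
Qed.

Lemma Delta2_ge : 0 < n -> n.+1 <= Delta2 (adj (n:=n)).
Proof.
move=> n0.
have h := leq_bigmax_cond (F := fun v => deg (adj (n:=n)) v)
  (P := fun v : V n => [exists u, adj v u && (deg (adj (n:=n)) v <= deg (adj (n:=n)) u)]) (Some (inl ord0)).
rewrite deg_inl in h; apply: h.
apply/existsP; exists (Some (inl (mx n))); rewrite !deg_inl leqnn andbT /=.
by rewrite -(inj_eq val_inj) /= eq_sym -lt0n.
Qed.

Definition col (x : V n) : 'I_n.+1 :=
  match x with None => mx n | Some (inl i) => i | Some (inr i) => i end.

Lemma col_ok x y : adj x y -> ~~ ((x == Some (inl (mx n))) && (y == Some (inr (mx n)))) ->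
  ~~ ((y == Some (inl (mx n))) && (x == Some (inr (mx n)))) -> col x != col y.
Proof.
case: x => [[i|i]|]; case: y => [[j|j]|] //=; rewrite ?(eq_sym (mx n)) //.
- by move=> /andP [/eqP -> /eqP ->]; rewrite !eqxx.
- by move=> /andP [/eqP -> /eqP ->]; rewrite !eqxx.
Qed.

Lemma omega_le : 0 < n -> omega (adj (n:=n)) <= n.+1.
Proof.
move=> n0; apply/bigmax_leqP => A /forallP H.
have H' x y : x \in A -> y \in A -> x != y -> adj x y.
  move=> xA yA ne; have := H x; rewrite xA /= => /forallP /(_ y).
  by rewrite yA ne.
case: (boolP ((Some (inl (mx n)) \in A) && (Some (inr (mx n)) \in A))).
  move=> /andP [lA rA].
  have sub : A \subset [set Some (inl (mx n)); Some (inr (mx n))].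
    apply/subsetP => x xA; rewrite !inE.
    apply: contraT; rewrite negb_or => /andP [n1 n2].
    have a1 := H' _ _ xA lA n1; have a2 := H' _ _ xA rA n2.
    move: n1 n2 a1 a2; case: x {xA} => [[j|j]|] //=.
    - move=> n1 _ _ /andP [/eqP jm _]; by rewrite jm eqxx in n1.
    - move=> _ n2 /andP [/eqP jm _]; by rewrite jm eqxx in n2.
    - by rewrite eqxx.
  apply: leq_trans (subset_leq_card sub) _.
  by rewrite cards2; case: eqP.
move=> nb.
rewrite -(card_in_imset (f := col)).
  by apply: leq_trans (max_card _) _; rewrite card_ord.
move=> x y xA yA cxy; apply/eqP; apply: contraT => ne.
have := col_ok (H' _ _ xA yA ne).
rewrite cxy eqxx => h; apply: h.
- apply/negP => /andP [/eqP ex /eqP ey]; move: nb; by rewrite -ex -ey xA yA.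
- apply/negP => /andP [/eqP ey /eqP ex]; move: nb; by rewrite -ex -ey xA yA.
Qed.
End G2.

Import Order.TTheory GRing.Theory Num.Theory.
Local Open Scope ring_scope.

Theorem mainTheorem7 :
  forall t : int,
  exists (T : finType) (e : rel T),
    simple_graph e /\
    t <= ((Delta2 e)%:Z) /\
    (maxn (omega e) (Delta2 e) < chi e)%N.
Proof.
move=> t; pose n := (absz t).+1.
exists (V n), (adj (n:=n)); split; first exact: adj_simple.
have n0 : (0 < n)%N by [].
have D1 := Delta2_le n; have D2 := Delta2_ge n0.
have hD : Delta2 (adj (n:=n)) = n.+1 by apply/eqP; rewrite eqn_leq D1 D2.
split.
  rewrite hD; apply: le_trans (ler_norm t) _.
  rewrite -abszE lez_nat /n; lia.
rewrite hD gtn_max chi_ge andbT.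
exact: (leq_ltn_trans (omega_le n0) (chi_ge n)).
Qed.
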